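(* Let $G(\lambda)\in\mathbb F(\lambda)^{p\times m}$, let $L(\lambda)$ be a strong block minimal bases linearization of $G(\lambda)$ as in the context, with transfer function matrix $\widehat G(\lambda)=\begin{bmatrix} M(\lambda)+\widehat K_2^TC(\lambda I_n-A)^{-1}B\widehat K_1 & K_2(\lambda)^T\\ K_1(\lambda) & 0\end{bmatrix}$. (a) If $\varepsilon_1\le\dots\le\varepsilon_l$ are the right minimal indices of $G(\lambda)$, then $\varepsilon_1+\deg N_1(\lambda)\le\dots\le\varepsilon_l+\deg N_1(\lambda)$ are the right minimal indices of $\widehat G(\lambda)$. (b) If $\eta_1\le\dots\le\eta_q$ are the left minimal indices of $G(\lambda)$, then $\eta_1+\deg N_2(\lambda)\le\dots\le\eta_q+\deg N_2(\lambda)$ are the left minimal indices of $\widehat G(\lambda)$.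
   Context: $\mathbb F$ is an arbitrary field. A polynomial matrix $K\in\mathbb F[\lambda]^{a\times b}$, $a<b$, is a minimal basis if its rows form a minimal basis (polynomial basis of least total degree) of the subspace they span; $K\in\mathbb F[\lambda]^{a_1\times b}$, $N\in\mathbb F[\lambda]^{a_2\times b}$ are dual minimal bases if both are minimal bases, $a_1+a_2=b$ and $KN^T=0$. Strong block minimal bases linearization: write $G=D+C(\lambda I_n-A)^{-1}B$ with $D$ the polynomial part, $\deg D>1$, and $C(\lambda I_n-A)^{-1}B$ a minimal order state-space realization of the strictly proper part. Let $K_1\in\mathbb F[\lambda]^{\widehat m\times(m+\widehat m)}$, $K_2\in\mathbb F[\lambda]^{\widehat p\times(p+\widehat p)}$ be minimal bases with all row degrees $1$, $N_1\in\mathbb F[\lambda]^{m\times(m+\widehat m)}$, $N_2\in\mathbb F[\lambda]^{p\times(p+\widehat p)}$ minimal bases dual to $K_1,K_2$, each with all row degrees equal, and $M(\lambda)$ a $(p+\widehat p)\times(m+\widehat m)$ pencil with $D=N_2MN_1^T$ and $\deg D=\deg N_1+\deg N_2+1$. Let constant $\widehat K_i$ and polynomial $\widehat N_i$ be such that $\begin{bmatrix}K_i\\ \widehat K_i\end{bmatrix}$ is unimodular with inverse $\begin{bmatrix}\widehat N_i^T & N_i^T\end{bmatrix}$, $i=1,2$. For nonsingular $T,S$, $L(\lambda)=\begin{bmatrix}T(\lambda I_n-A)S & TB\widehat K_1 & 0\\ -\widehat K_2^TCS & M(\lambda) & K_2(\lambda)^T\\ 0 & K_1(\lambda) & 0\end{bmatrix}$.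 Right (left) minimal indices of a rational matrix $G$: degrees of the vectors of a minimal basis of $\mathcal N_r(G)=\{x:Gx=0\}$ ($\mathcal N_\ell(G)=\{x:x^TG=0\}$). *)

(* Defs.v *)
From HB Require Import structures.
From mathcomp Require Import all_boot all_order all_algebra.
Set Implicit Arguments. Unset Strict Implicit. Unset Printing Implicit Defensive.
Import Order.TTheory GRing.Theory Num.Theory.
Local Open Scope ring_scope.

Section Defs.
Variable F : fieldType.

Definition ratF := {fraction {poly F}}.

Definition ratmx a b (P : 'M[{poly F}]_(a, b)) : 'M[ratF]_(a, b) :=
  map_mx (fun x => FracField.tofrac x) P.

Definition polymx a b (A : 'M[F]_(a, b)) : 'M[{poly F}]_(a, b) :=
  map_mx polyC A.

Definition rowdeg a b (P : 'M[{poly F}]_(a, b)) (i : 'I_a) : nat :=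
  (\max_(j < b) size (P i j)).-1.

Definition mxdeg a b (P : 'M[{poly F}]_(a, b)) : nat :=
  (\max_(i < a) \max_(j < b) size (P i j)).-1.

Definition totdeg a b (P : 'M[{poly F}]_(a, b)) : nat :=
  (\sum_(i < a) rowdeg P i)%N.

Definition poly_basis_of k a b (V : 'M[ratF]_(k, b)) (P : 'M[{poly F}]_(a, b)) :=
  row_free (ratmx P) && (ratmx P == V)%MS.

Definition minimal_basis_of k a b (V : 'M[ratF]_(k, b)) (P : 'M[{poly F}]_(a, b)) :=
  poly_basis_of V P /\
  forall a' (P' : 'M[{poly F}]_(a', b)), poly_basis_of V P' -> (totdeg P <= totdeg P')%N.

Definition minimal_basis a b (K : 'M[{poly F}]_(a, b)) := minimal_basis_of (ratmx K) K.

Definition dual_minimal_bases a1 a2 b (K : 'M[{poly F}]_(a1, b)) (N : 'M[{poly F}]_(a2, b)) :=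
  [/\ minimal_basis K, minimal_basis N, (a1 + a2 = b)%N & K *m N^T = 0].

Definition row_degrees_eq a b (P : 'M[{poly F}]_(a, b)) (d : nat) :=
  forall i, rowdeg P i = d.

Definition equal_row_degrees a b (P : 'M[{poly F}]_(a, b)) :=
  forall i j, rowdeg P i = rowdeg P j.

Definition ss_tf n p m (A : 'M[F]_n) (B : 'M[F]_(n, m)) (C : 'M[F]_(p, n)) : 'M[ratF]_(p, m) :=
  ratmx (polymx C) *m invmx (ratmx (char_poly_mx A)) *m ratmx (polymx B).

Definition minimal_order_realization n p m (A : 'M[F]_n) (B : 'M[F]_(n, m)) (C : 'M[F]_(p, n)) :=
  forall n' (A' : 'M[F]_n') (B' : 'M[F]_(n', m)) (C' : 'M[F]_(p, n')),
    ss_tf A' B' C' = ss_tf A B C -> (n <= n')%N.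

(* right null space N_r(G) = {x : G x = 0}, as a row space (x^T G^T = 0) *)
Definition right_null p m (G : 'M[ratF]_(p, m)) : 'M[ratF]_m := kermx G^T.
Definition left_null p m (G : 'M[ratF]_(p, m)) : 'M[ratF]_p := kermx G.

Definition min_indices_of k b (V : 'M[ratF]_(k, b)) (s : seq nat) :=
  sorted leq s /\
  exists l (P : 'M[{poly F}]_(l, b)),
    minimal_basis_of V P /\ perm_eq s [seq rowdeg P i | i <- enum 'I_l].

Definition right_min_indices p m (G : 'M[ratF]_(p, m)) (s : seq nat) :=
  min_indices_of (right_null G) s.
Definition left_min_indices p m (G : 'M[ratF]_(p, m)) (s : seq nat) :=
  min_indices_of (left_null G) s.

Definition Ghat n p m ph mh (A : 'M[F]_n) (B : 'M[F]_(n, m)) (C : 'M[F]_(p, n))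
  (M : 'M[{poly F}]_(p + ph, m + mh)) (K1 : 'M[{poly F}]_(mh, m + mh))
  (K2 : 'M[{poly F}]_(ph, p + ph)) (K1h : 'M[F]_(m, m + mh)) (K2h : 'M[F]_(p, p + ph))
  : 'M[ratF]_(p + ph + mh, m + mh + ph) :=
  block_mx (ratmx M + ss_tf A (B *m K1h) (K2h^T *m C)) (ratmx K2^T)
           (ratmx K1) 0.

Definition Lin n p m ph mh (A : 'M[F]_n) (B : 'M[F]_(n, m)) (C : 'M[F]_(p, n))
  (M : 'M[{poly F}]_(p + ph, m + mh)) (K1 : 'M[{poly F}]_(mh, m + mh))
  (K2 : 'M[{poly F}]_(ph, p + ph)) (K1h : 'M[F]_(m, m + mh)) (K2h : 'M[F]_(p, p + ph))
  (T S : 'M[F]_n) : 'M[{poly F}]_(n + (p + ph) + mh, n + (m + mh) + ph) :=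
  block_mx
    (block_mx (polymx T *m char_poly_mx A *m polymx S) (polymx (T *m B *m K1h))
              (- polymx (K2h^T *m C *m S)) M)
    (col_mx 0 K2^T)
    (row_mx 0 K1) 0.

End Defs.

(* Main.v *)
Require Import Defs.
From HB Require Import structures.
From mathcomp Require Import all_boot all_order all_algebra zify.
Import GRing.Theory.
Local Open Scope ring_scope.

Module Aux.
Set Implicit Arguments. Unset Strict Implicit. Unset Printing Implicit Defensive.
Section Prelim.
Variable F : fieldType.
Local Notation RF := (ratF F).
Local Notation tf := (@FracField.tofrac {poly F}).

Lemma ratmxE a b (P : 'M[{poly F}]_(a,b)) i j : ratmx P i j = tf (P i j).
Proof. by rewrite /ratmx mxE. Qed.

Lemma ratmxM a b c (P : 'M[{poly F}]_(a,b)) (Q : 'M_(b,c)) :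
  ratmx (P *m Q) = ratmx P *m ratmx Q.
Proof. exact: (map_mxM tf). Qed.

Lemma ratmxD a b (P Q : 'M[{poly F}]_(a,b)) : ratmx (P + Q) = ratmx P + ratmx Q.
Proof. exact: (map_mxD tf). Qed.

Lemma ratmxN a b (P : 'M[{poly F}]_(a,b)) : ratmx (- P) = - ratmx P.
Proof. exact: (map_mxN tf). Qed.

Lemma ratmx0 a b : ratmx (0 : 'M[{poly F}]_(a,b)) = 0.
Proof. exact: (map_mx0 tf). Qed.

Lemma ratmx1 a : ratmx (1%:M : 'M[{poly F}]_a) = 1%:M.
Proof. exact: (map_mx1 tf). Qed.

Lemma ratmx_tr a b (P : 'M[{poly F}]_(a,b)) : ratmx P^T = (ratmx P)^T.
Proof. by apply/matrixP=> i j; rewrite !mxE. Qed.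

Lemma ratmx_inj a b : injective (@ratmx F a b).
Proof.
move=> P Q /matrixP e; apply/matrixP=> i j; have := e i j.
by rewrite !ratmxE => /eqP; rewrite tofrac_eq => /eqP.
Qed.

Lemma ratmx_row a b c (P : 'M[{poly F}]_(a,b)) (Q : 'M_(a,c)) :
  ratmx (row_mx P Q) = row_mx (ratmx P) (ratmx Q).
Proof. exact: (map_row_mx tf). Qed.

Lemma ratmx_col a b c (P : 'M[{poly F}]_(a,c)) (Q : 'M_(b,c)) :
  ratmx (col_mx P Q) = col_mx (ratmx P) (ratmx Q).
Proof. exact: (map_col_mx tf). Qed.

Lemma polymxM a b c (P : 'M[F]_(a,b)) (Q : 'M_(b,c)) :
  polymx (P *m Q) = polymx P *m polymx Q.
Proof. exact: (map_mxM polyC). Qed.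

Lemma polymx_tr a b (P : 'M[F]_(a,b)) : polymx P^T = (polymx P)^T.
Proof. by apply/matrixP=> i j; rewrite !mxE. Qed.

Lemma ratmx_scale a b (c : {poly F}) (P : 'M[{poly F}]_(a,b)) :
  ratmx (c *: P) = tf c *: ratmx P.
Proof. by apply/matrixP=> i j; rewrite !mxE rmorphM. Qed.

End Prelim.

Section Deg.
Variable F : fieldType.

Definition cmx k a b (P : 'M[{poly F}]_(a,b)) : 'M[F]_(a,b) :=
  map_mx (fun q : {poly F} => q`_k) P.

Lemma rowdeg_leP a b (P : 'M[{poly F}]_(a,b)) i k :
  reflect (forall j, (size (P i j) <= k.+1)%N) (rowdeg P i <= k)%N.
Proof.
rewrite /rowdeg.
have -> : forall x : nat, (x.-1 <= k)%N = (x <= k.+1)%N by case.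
by apply: (iffP (bigmax_leqP _ _ _)) => [h j|h j _]; apply: h.
Qed.

Lemma rowdeg_ge a b (P : 'M[{poly F}]_(a,b)) i j :
  ((size (P i j)).-1 <= rowdeg P i)%N.
Proof.
rewrite /rowdeg; have := leq_bigmax (F := fun j => size (P i j)) j.
by case: (size _) => //= s; case: (\max_(j0 < b) _) => // t; rewrite ltnS.
Qed.

Lemma rowdeg_max a b (P : 'M[{poly F}]_(a,b)) i :
  row i P != 0 -> exists j, size (P i j) = (rowdeg P i).+1.
Proof.
move=> nz.
have [j Pj] : exists j, P i j != 0.
  apply/existsP; apply: contraR nz; rewrite negb_exists => /forallP h.
  by apply/eqP/rowP=> j; rewrite !mxE; apply/eqP; have := h j; rewrite negbK.
have hb : (0 < #|'I_b|)%N by apply/card_gt0P; exists j.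
have [j0 e] := eq_bigmax (fun j => size (P i j)) hb.
exists j0; rewrite /rowdeg e prednK //.
rewrite -e; apply: leq_trans (leq_bigmax (F := fun j => size (P i j)) j); by rewrite size_poly_gt0.
Qed.

Lemma size_mx_mul a b c (X : 'M[{poly F}]_(a,b)) (Y : 'M[{poly F}]_(b,c)) s t :
  (forall i k, size (X i k) <= s.+1)%N -> (forall k j, size (Y k j) <= t.+1)%N ->
  forall i j, (size ((X *m Y) i j) <= (s + t).+1)%N.
Proof.
move=> hX hY i j; rewrite mxE; apply: leq_trans (size_sum _ _ _) _.
apply/bigmax_leqP=> k _ /=; apply: leq_trans (size_mul_leq _ _) _.
by have := hX i k; have := hY k j; lia.
Qed.

Lemma coefM_top (p q : {poly F}) e d :
  (size p <= e.+1)%N -> (size q <= d.+1)%N -> (p * q)`_(e + d) = p`_e * q`_d.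
Proof.
move=> hp hq; rewrite coefM (bigD1 (Ordinal (leq_addr d e.+1 : (e < (e+d).+1)%N))) //=.
rewrite addKn big1 ?addr0 // => k; rewrite -val_eqE /= => nk.
have [lt|gt] := ltnP k e.
  rewrite (nth_default 0 (s := q)) ?mulr0 //; apply: leq_trans hq _; lia.
rewrite (nth_default 0 (s := p)) ?mul0r //; apply: leq_trans hp _.
by move: nk gt; case: ltngtP.
Qed.

Lemma pred_deg a b (P : 'M[{poly F}]_(a,b)) d (u : 'rV[{poly F}]_a) :
  (forall i j, size (P i j) <= d.+1)%N -> row_free (cmx d P) -> u != 0 ->
  rowdeg (u *m P) ord0 = (rowdeg u ord0 + d)%N.
Proof.
move=> hP fr nz; set e := rowdeg u 0.
have hu : forall i k, (size (u i k) <= e.+1)%N.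
  by move=> i k; rewrite (ord1 i); apply/rowdeg_leP.
apply/eqP; rewrite eqn_leq; apply/andP; split.
  by apply/rowdeg_leP=> j; apply: size_mx_mul.
have rowu : row ord0 u = u by apply/rowP=> j; rewrite !mxE.
have [j hj] : exists j, size (u ord0 j) = e.+1 by apply: rowdeg_max; rewrite rowu.
have hc : cmx e u *m cmx d P != 0.
  rewrite mulmx_free_eq0 //; apply/eqP => /matrixP /(_ ord0 j); rewrite !mxE => h.
  have : lead_coef (u 0 j) != 0.
    by rewrite lead_coef_eq0 -size_poly_eq0 hj.
  by rewrite lead_coefE hj /= h eqxx.
have [k hk] : exists k, (cmx e u *m cmx d P) ord0 k != 0.
  apply/existsP; apply: contraR hc; rewrite negb_exists => /forallP h.
  by apply/eqP/matrixP=> i k; rewrite (ord1 i) [RHS]mxE; apply/eqP; have := h k; rewrite negbK.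
have : ((u *m P) ord0 k)`_(e + d) != 0.
  move: hk; rewrite !mxE coef_sum; apply: contra => /eqP h; apply/eqP.
  apply: etrans h; apply: eq_bigr => i _; rewrite !mxE coefM_top ?hu ?hP //.
move=> nz0; have := rowdeg_ge (u *m P) ord0 k.
have : (e + d < size ((u *m P) ord0 k))%N.
  by rewrite ltnNge; apply: contra nz0 => h; rewrite nth_default.
move=> h1; apply: leq_trans; by rewrite -ltnS (ltn_predK h1).
Qed.

Local Notation tf := (@FracField.tofrac {poly F}).

Lemma size_le_coef (p : {poly F}) d :
  (size p <= d.+1)%N -> p`_d = 0 -> (size p <= d)%N.
Proof.
rewrite leq_eqVlt => /orP [/eqP h|//] hd.
have : lead_coef p = 0 by rewrite lead_coefE h.
by move/eqP; rewrite lead_coef_eq0 => /eqP ->; rewrite size_poly0.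
Qed.

Lemma polymx_size a b (X : 'M[F]_(a,b)) i j : (size (polymx X i j) <= 0.+1)%N.
Proof. by rewrite mxE size_polyC_leq1. Qed.

Lemma rowdeg_eq a b c (P : 'M[{poly F}]_(a,b)) (Q : 'M[{poly F}]_(c,b)) i k :
  (forall j, P i j = Q k j) -> rowdeg P i = rowdeg Q k.
Proof. by move=> h; rewrite /rowdeg; apply: congr1; apply: eq_bigr => j _; rewrite h. Qed.

Lemma minbasis_rowfree k a b (V : 'M[ratF F]_(k,b)) (P : 'M[{poly F}]_(a,b)) d :
  minimal_basis_of V P -> (forall i, rowdeg P i = d) -> row_free (cmx d P).
Proof.
move=> [[/andP [frP eqPV] minP] hd]; apply: contraT => nfr.
have : kermx (cmx d P) != 0 by rewrite kermx_eq0.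
case/rowV0Pn => c /sub_kermxP hc cnz.
have [i0 ci0] : exists i0, c ord0 i0 != 0.
  apply/existsP; apply: contraR cnz; rewrite negb_exists => /forallP h.
  by apply/eqP/rowP=> j; rewrite !mxE; apply/eqP; have := h j; rewrite negbK.
have hPs : forall i j, (size (P i j) <= d.+1)%N by move=> i j; apply/rowdeg_leP; rewrite hd.
set w := polymx c *m P.
have hw : forall j, (size (w ord0 j) <= d)%N.
  move=> j; apply: size_le_coef; first by apply: (size_mx_mul (s := 0)) => //; apply: polymx_size.
  move/matrixP: (hc) => /(_ ord0 j); rewrite !mxE => h; rewrite coef_sum; apply: etrans h.
  by apply: eq_bigr => i _; rewrite !mxE coefCM.
have hrc : ratmx (polymx c) ord0 i0 != 0 by rewrite !mxE tofrac_eq0 polyC_eq0.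
have [w0|wnz] := eqVneq w 0.
  have : ratmx (polymx c) *m ratmx P == 0 by rewrite -ratmxM -/w w0 ratmx0.
  rewrite mulmx_free_eq0 // => /eqP h; move: hrc; by rewrite h mxE eqxx.
have dpos : (0 < d)%N.
  case: d hw hPs hd {hc nfr minP} => // hw _ _; case/eqP: wnz; apply/rowP => j.
  by rewrite [RHS]mxE; apply/eqP; rewrite -size_poly_eq0 -leqn0 hw.
have hwd : (rowdeg w ord0 < d)%N.
  have : (rowdeg w ord0 <= d.-1)%N by apply/rowdeg_leP => j; rewrite prednK // hw.
  by move=> h; apply: leq_ltn_trans h _; rewrite ltn_predL.
pose E : 'M[F]_a := \matrix_(i, j) if i == i0 then c ord0 j else (i == j)%:R.
have Eu : E \in unitmx.
  rewrite -row_free_unit; apply: inj_row_free => v hv.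
  have hv0 : v ord0 i0 = 0.
    move/matrixP: (hv) => /(_ ord0 i0); rewrite !mxE (bigD1 i0) //= mxE eqxx big1.
      by rewrite addr0 => /eqP; rewrite mulf_eq0 (negPf ci0) orbF => /eqP.
    by move=> i /negPf ni; rewrite /E mxE ni mulr0.
  apply/rowP => j; case: (eqVneq j i0) => [->|nj]; first by rewrite hv0 mxE.
  move/matrixP: (hv) => /(_ ord0 j); rewrite !mxE (bigD1 i0) //= mxE eqxx hv0 mul0r add0r.
  rewrite (bigD1 j) ?nj //= mxE (negPf nj) eqxx mulr1 big1 ?addr0 //.
  by move=> i /andP [ni nij]; rewrite mxE (negPf ni) (negPf nij) mulr0.
set Q := polymx E *m P.
have hQ : forall i j, Q i j = if i == i0 then w ord0 j else P i j.
  move=> i j; rewrite !mxE; case: (eqVneq i i0) => [->|ni].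
    by apply: eq_bigr => l _; rewrite !mxE eqxx.
  rewrite (bigD1 i) //= !mxE (negPf ni) eqxx big1 ?addr0 ?mul1r //.
  by move=> l nl; rewrite !mxE (negPf ni) eq_sym (negPf nl) mul0r.
have rQ : ratmx Q = ratmx (polymx E) *m ratmx P by rewrite ratmxM.
have Eu' : ratmx (polymx E) \in unitmx.
  by rewrite unitmxE /ratmx (det_map_mx tf) (det_map_mx polyC) unitfE tofrac_eq0 polyC_eq0 -unitfE -unitmxE.
have eqQP : (ratmx Q == ratmx P)%MS by apply/eqmxMunitP; exists (ratmx (polymx E)).
have : poly_basis_of V Q.
  apply/andP; split; first by rewrite /row_free (eqmx_rank eqQP).
  by apply/eqmxP; exact: (eqmx_trans (eqmxP eqQP) (eqmxP eqPV)).
move/minP; rewrite leqNgt => /negP h. apply: False_ind; apply: h; rewrite /totdeg (bigD1 i0) //= [X in (_ < X)%N](bigD1 i0) //=.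
rewrite (rowdeg_eq (Q := w) (k := ord0)); last by move=> j; rewrite hQ eqxx.
rewrite hd -addSn leq_add // leq_eqVlt; apply/orP; left; apply/eqP.
apply: eq_bigr => i ni; rewrite hd; apply: etrans (hd i); apply: rowdeg_eq => j.
by rewrite hQ (negPf ni).
Qed.

Lemma size_prod2 k (f : 'I_k -> {poly F}) :
  (forall i, size (f i) <= 2)%N -> (size (\prod_i f i)%R <= k.+1)%N.
Proof.
move=> hf.
have : (size (\prod_(i < k) f i)%R <= (\sum_(i < k) 1).+1)%N.
  apply: (big_ind2 (fun (p : {poly F}) (m : nat) => size p <= m.+1)%N) => [|p mp q mq IHp IHq|j _].
  - by rewrite size_poly1.
  - apply: leq_trans (size_polyMleq _ _) _; lia.
  - exact: hf.
by rewrite sum1_card card_ord.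
Qed.

Lemma size_det2 k (X : 'M[{poly F}]_k) :
  (forall i j, size (X i j) <= 2)%N -> (size (\det X) <= k.+1)%N.
Proof.
move=> hX; rewrite /determinant; apply: leq_trans (size_sum _ _ _) _.
apply/bigmax_leqP => s _ /=; rewrite size_Msign; apply: size_prod2 => i; exact: hX.
Qed.

Lemma size_cpm n (A : 'M[F]_n) i j : (size (char_poly_mx A i j) <= 2)%N.
Proof.
rewrite !mxE; case: (i == j) => /=.
  by rewrite mulr1n size_XsubC.
by rewrite mulr0n sub0r size_polyN size_polyC; case: (_ != 0).
Qed.

Lemma size_adj_cpm n (A : 'M[F]_n) i j : (size (\adj (char_poly_mx A) i j) <= n.-1.+1)%N.
Proof.
rewrite mxE /cofactor size_Msign; apply: size_det2 => k l.
by rewrite (_ : row' _ _ k l = char_poly_mx A (lift j k) (lift i l)) ?size_cpm // [LHS]mxE [col' _ _ _ _]mxE.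
Qed.

Lemma proper_deg n k (A : 'M[F]_n) (x : 'rV[{poly F}]_n) (Cc : 'M[F]_(n,k))
  (v : 'rV[{poly F}]_k) :
  ratmx v = ratmx x *m invmx (ratmx (char_poly_mx A)) *m ratmx (polymx Cc) ->
  v != 0 -> (rowdeg v ord0 < rowdeg x ord0)%N.
Proof.
move=> hv nz.
case: n A x Cc hv => [|n] A x Cc hv.
  by move: nz; rewrite -(inj_eq (@ratmx_inj _ _ _)) hv thinmx0 !mul0mx ratmx0 eqxx.
set chi := char_poly A.
have chi0 : chi != 0 by rewrite monic_neq0 // char_poly_monic.
have hdet : \det (ratmx (char_poly_mx A)) = tf chi by rewrite /ratmx (det_map_mx tf).
have hu : ratmx (char_poly_mx A) \in unitmx by rewrite unitmxE unitfE hdet tofrac_eq0.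
have hadj : \adj (ratmx (char_poly_mx A)) = ratmx (\adj (char_poly_mx A)) by rewrite /ratmx map_mx_adj.
set W := x *m \adj (char_poly_mx A) *m polymx Cc.
have eW : chi *: v = W.
  apply: (@ratmx_inj _ _ _); rewrite ratmx_scale hv /invmx hu hdet hadj.
  rewrite -scalemxAr -scalemxAl scalerA mulfV ?tofrac_eq0 // scale1r.
  by rewrite /W !ratmxM.
set e := rowdeg x ord0.
have hW : forall j, (size (W ord0 j) <= (e + n + 0).+1)%N.
  apply: size_mx_mul; last by move=> *; apply: polymx_size.
  apply: size_mx_mul; last by move=> *; apply: size_adj_cpm.
  by move=> i l; rewrite (ord1 i); apply/rowdeg_leP.
have rowv : row ord0 v = v by apply/rowP=> j; rewrite !mxE.
have [j hj] : exists j, size (v ord0 j) = (rowdeg v ord0).+1 by apply: rowdeg_max; rewrite rowv.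
have := hW j; rewrite -eW mxE size_mul // ?size_char_poly ?hj.
  lia.
by rewrite -size_poly_eq0 hj.
Qed.

Lemma rowdeg0 a b i : rowdeg (0 : 'M[{poly F}]_(a,b)) i = 0%N.
Proof. by apply/eqP; rewrite -leqn0; apply/rowdeg_leP => j; rewrite mxE size_poly0. Qed.

Lemma rowdegN a b (X : 'M[{poly F}]_(a,b)) i : rowdeg (- X) i = rowdeg X i.
Proof. by rewrite /rowdeg; congr (_.-1); apply: eq_bigr => j _; rewrite mxE size_polyN. Qed.

Lemma rowdeg_add_le a b (X Y : 'M[{poly F}]_(a,b)) i k :
  (rowdeg X i <= k)%N -> (rowdeg Y i <= k)%N -> (rowdeg (X + Y) i <= k)%N.
Proof.
move=> /rowdeg_leP hX /rowdeg_leP hY; apply/rowdeg_leP => j; rewrite mxE.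
by apply: leq_trans (size_add _ _) _; rewrite geq_max hX hY.
Qed.

Lemma rowdeg_mul_le a b (u : 'rV[{poly F}]_a) (P : 'M[{poly F}]_(a,b)) t :
  (forall i j, size (P i j) <= t.+1)%N -> (rowdeg (u *m P) ord0 <= rowdeg u ord0 + t)%N.
Proof.
move=> hP; apply/rowdeg_leP => j; apply: size_mx_mul => // i k.
by rewrite (ord1 i); apply/rowdeg_leP.
Qed.

Lemma rowdeg_row a b (X : 'M[{poly F}]_(a,b)) i : rowdeg (row i X) ord0 = rowdeg X i.
Proof. by apply: rowdeg_eq => j; rewrite mxE. Qed.

Lemma rowdeg_mxdeg a b (N : 'M[{poly F}]_(a,b)) :
  equal_row_degrees N -> forall i, rowdeg N i = mxdeg N.
Proof.
move=> he i; have ha : (0 < #|'I_a|)%N by apply/card_gt0P; exists i.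
have [i0 e] := eq_bigmax (fun i => \max_(j < b) size (N i j)) ha.
by rewrite /mxdeg e -/(rowdeg N i0) (he i i0).
Qed.

Lemma rowdeg_row_mx a b c (X : 'M[{poly F}]_(a,b)) (Y : 'M[{poly F}]_(a,c)) i :
  rowdeg (row_mx X Y) i = maxn (rowdeg X i) (rowdeg Y i).
Proof.
apply/eqP; rewrite eqn_leq; apply/andP; split.
  apply/rowdeg_leP => j; rewrite -(splitK j); case: (split j) => k /=; rewrite ?row_mxEl ?row_mxEr.
    by apply: leq_trans (_ : size (X i k) <= (rowdeg X i).+1)%N _;
     [apply/rowdeg_leP | rewrite ltnS leq_maxl].
  by apply: leq_trans (_ : size (Y i k) <= (rowdeg Y i).+1)%N _;
     [apply/rowdeg_leP | rewrite ltnS leq_maxr].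
rewrite geq_max; apply/andP; split.
  apply/rowdeg_leP => j; rewrite -(row_mxEl X Y); apply/rowdeg_leP; exact: leqnn.
apply/rowdeg_leP => j; rewrite -(row_mxEr X Y); apply/rowdeg_leP; exact: leqnn.
Qed.

Lemma cpm_tr n (A : 'M[F]_n) : char_poly_mx A^T = (char_poly_mx A)^T.
Proof. by rewrite /char_poly_mx raddfB /= tr_scalar_mx map_trmx. Qed.

Lemma ratmx_rowsel a b (P : 'M[{poly F}]_(a,b)) i : ratmx (row i P) = row i (ratmx P).
Proof. by apply/rowP => j; rewrite !mxE. Qed.

Lemma rowfree_row_nz (K : fieldType) a b (X : 'M[K]_(a,b)) i : row_free X -> row i X != 0.
Proof.
move=> fr; rewrite rowE mulmx_free_eq0 //; apply/eqP => /matrixP /(_ ord0 i).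
by rewrite !mxE !eqxx /= => /eqP; rewrite oner_eq0.
Qed.

Lemma rowfree_prow_nz a b (P : 'M[{poly F}]_(a,b)) i : row_free (ratmx P) -> row i P != 0.
Proof.
move=> fr; apply/eqP => h; have := rowfree_row_nz i fr.
by rewrite -ratmx_rowsel h ratmx0 eqxx.
Qed.
End Deg.

Section Main.
Variables (F : fieldType) (n p m ph mh : nat).
Variables (G : 'M[ratF F]_(p, m)) (D : 'M[{poly F}]_(p, m)) (A : 'M[F]_n)
  (B : 'M[F]_(n, m)) (C : 'M[F]_(p, n))
  (K1 : 'M[{poly F}]_(mh, m + mh)) (K2 : 'M[{poly F}]_(ph, p + ph))
  (N1 : 'M[{poly F}]_(m, m + mh)) (N2 : 'M[{poly F}]_(p, p + ph))
  (M : 'M[{poly F}]_(p + ph, m + mh))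
  (K1h : 'M[F]_(m, m + mh)) (K2h : 'M[F]_(p, p + ph))
  (N1h : 'M[{poly F}]_(mh, m + mh)) (N2h : 'M[{poly F}]_(ph, p + ph)).
Hypotheses (hG : G = ratmx D + ss_tf A B C) (hD : D = N2 *m M *m N1^T)
  (U1 : col_mx K1 (polymx K1h) *m row_mx N1h^T N1^T = 1%:M)
  (U1' : row_mx N1h^T N1^T *m col_mx K1 (polymx K1h) = 1%:M)
  (U2 : col_mx K2 (polymx K2h) *m row_mx N2h^T N2^T = 1%:M)
  (U2' : row_mx N2h^T N2^T *m col_mx K2 (polymx K2h) = 1%:M).

Local Notation r := ratmx.
Local Notation pK1h := (polymx K1h).
Local Notation pK2h := (polymx K2h).

Lemma blk_ids a b c (X : 'M[{poly F}]_(a, c)) (Y : 'M_(b, c)) (Z : 'M_(c, a)) (W : 'M_(c, b)) :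
  col_mx X Y *m row_mx Z W = 1%:M ->
  [/\ X *m Z = 1%:M, X *m W = 0, Y *m Z = 0 & Y *m W = 1%:M].
Proof.
rewrite mul_col_row scalar_mx_block => /eq_block_mx [h1 h2 h3 h4]; by split.
Qed.

Lemma I1a : K1 *m N1^T = 0. Proof. by have [] := blk_ids U1. Qed.
Lemma I1b : pK1h *m N1^T = 1%:M. Proof. by have [] := blk_ids U1. Qed.
Lemma I1c : N1h^T *m K1 + N1^T *m pK1h = 1%:M. Proof. by rewrite -mul_row_col U1'. Qed.
Lemma I2a : K2 *m N2^T = 0. Proof. by have [] := blk_ids U2. Qed.
Lemma I2b : pK2h *m N2^T = 1%:M. Proof. by have [] := blk_ids U2. Qed.
Lemma I2c : K2 *m N2h^T = 1%:M. Proof. by have [] := blk_ids U2. Qed.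
Lemma I2d : pK2h *m N2h^T = 0. Proof. by have [] := blk_ids U2. Qed.
Lemma I2e : N2h^T *m K2 + N2^T *m pK2h = 1%:M. Proof. by rewrite -mul_row_col U2'. Qed.

Definition Gh := Ghat A B C M K1 K2 K1h K2h.
Definition Phi : 'M[{poly F}]_(m + mh + ph, m) := col_mx N1^T (- (N2h *m M *m N1^T)).
Definition Psi : 'M[{poly F}]_(m, m + mh + ph) := row_mx pK1h 0.

Lemma PsiPhi : Psi *m Phi = 1%:M.
Proof. by rewrite /Psi /Phi mul_row_col mul0mx addr0 I1b. Qed.

Lemma ssE : ss_tf A (B *m K1h) (K2h^T *m C) = (r pK2h)^T *m ss_tf A B C *m r pK1h.
Proof.
by rewrite /ss_tf !polymxM !ratmxM polymx_tr ratmx_tr !mulmxA.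
Qed.

Lemma rI a b c (X : 'M[{poly F}]_(a,b)) (Y : 'M_(b,c)) Z : X *m Y = Z -> r X *m r Y = r Z.
Proof. by move=> <-; rewrite ratmxM. Qed.

Lemma colA k (Z : 'M_(m,k)) : G *m Z = 0 -> Gh *m (r Phi *m Z) = 0.
Proof.
move=> hZ; rewrite /Gh /Ghat /Phi ratmx_col mul_col_mx [col_mx _ _ *m Z]mul_col_mx !mul_row_col.
apply/eqP; rewrite col_mx_eq0 mul0mx addr0 (mulmxA (r K1)) (rI I1a) ratmx0 mul0mx eqxx andbT.
rewrite ssE; move: hG; set S := ss_tf A B C; clearbody S => hG'.
rewrite ratmxN !ratmxM mulNmx mulmxN !mulmxA.
have e' : K2^T *m N2h + pK2h^T *m N2 = 1%:M.
  by rewrite -[N2h]trmxK -[N2]trmxK -!trmx_mul -raddfD /= I2e trmx1.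
have e : r K2^T *m r N2h = 1%:M - (r pK2h)^T *m r N2.
  by rewrite -(ratmx1 _) -e' ratmxD !ratmxM !ratmx_tr addrK.
rewrite e mulmxBl mul1mx !mulmxDl !mulNmx ?mulmxA.
set X := r M *m r N1^T *m Z.
have -> : (r pK2h)^T *m r N2 *m r M *m r N1^T *m Z = (r pK2h)^T *m (r D *m Z).
  by rewrite hD !ratmxM !mulmxA.
have -> : (r pK2h)^T *m S *m r pK1h *m r N1^T *m Z = (r pK2h)^T *m (S *m Z).
  by rewrite -!mulmxA (mulmxA (r pK1h)) (rI I1b) ratmx1 mul1mx.
rewrite opprD opprK addrA (addrC X) addrK -mulmxDr -mulmxDl addrC -hG' hZ mulmx0.
by [].
Qed.


Lemma trI a b c (X : 'M[{poly F}]_(a,b)) (Y : 'M_(b,c)) Z : X *m Y = Z -> r Y^T *m r X^T = r Z^T.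
Proof. by move=> <-; rewrite -ratmxM trmx_mul. Qed.

Lemma colB k (W : 'M_(m + mh + ph, k)) :
  Gh *m W = 0 -> W = r Phi *m (r Psi *m W) /\ G *m (r Psi *m W) = 0.
Proof.
rewrite -[W](vsubmxK W); set X := usubmx W; set Y := dsubmx W.
rewrite /Gh /Ghat mul_col_mx !mul_row_col ssE => /eqP.
move: hG; set S := ss_tf A B C; clearbody S => hG'.
rewrite col_mx_eq0 mul0mx addr0 => /andP [/eqP h1 /eqP h2].
rewrite /Psi ratmx_row ratmx0 mul_row_col mul0mx addr0.
set Z := r pK1h *m X.
have hX : X = r N1^T *m Z.
  rewrite -[LHS]mul1mx -(ratmx1 _) -I1c ratmxD !ratmxM mulmxDl -!mulmxA h2 mulmx0 add0r.
  by [].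
have hK : r K2^T *m Y = - ((r M + (r pK2h)^T *m S *m r pK1h) *m X).
  by apply/eqP; rewrite -addr_eq0 addrC h1.
have e0 : r N2h *m (r pK2h)^T = 0 by rewrite -ratmx_tr -ratmxM -[N2h]trmxK -trmx_mul I2d trmx0 ratmx0.
have e1 : r N2 *m (r pK2h)^T = 1%:M by rewrite -ratmx_tr -ratmxM -[N2]trmxK -trmx_mul I2b trmx1 ratmx1.
have e2 : r N2 *m r K2^T = 0 by rewrite -ratmxM -[N2]trmxK -trmx_mul I2a trmx0 ratmx0.
have e3 : r N2h *m r K2^T = 1%:M by rewrite -ratmxM -[N2h]trmxK -trmx_mul I2c trmx1 ratmx1.
split.
  rewrite /Phi ratmx_col mul_col_mx -hX; congr col_mx.
  rewrite -[LHS]mul1mx -e3 -mulmxA hK mulmxN mulmxDl mulmxDr !mulmxA e0 !mul0mx addr0.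
  rewrite ratmxN !ratmxM !mulNmx ?mulmxA; congr (- _). by rewrite {1}hX !mulmxA.
have := congr1 (mulmx (r N2)) h1; rewrite mulmx0 mulmxDr.
rewrite (mulmxA (r N2) (r K2^T)) e2 mul0mx addr0 mulmxDl mulmxDr !mulmxA e1 mul1mx => <-.
rewrite hG' mulmxDl hD !ratmxM mulmxDl; congr (_ + _); by rewrite {2}hX !mulmxA.
Qed.

Hypotheses (hK2min : minimal_basis K2) (hK2d : row_degrees_eq K2 1)
  (hN1min : minimal_basis N1) (hN1e : equal_row_degrees N1)
  (hMs : forall i j, (size (M i j) <= 2)%N).

Local Notation d := (mxdeg N1).

Lemma N1s i j : (size (N1 i j) <= d.+1)%N.
Proof. by move: j; apply/rowdeg_leP; rewrite (rowdeg_mxdeg hN1e). Qed.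
Lemma N1f : row_free (cmx d N1).
Proof. exact: (minbasis_rowfree hN1min (rowdeg_mxdeg hN1e)). Qed.
Lemma K2s i j : (size (K2 i j) <= 1.+1)%N.
Proof. by move: j; apply/rowdeg_leP; rewrite hK2d. Qed.
Lemma K2f : row_free (cmx 1 K2).
Proof. exact: (minbasis_rowfree hK2min hK2d). Qed.

Lemma degN1 (u : 'rV_m) : u != 0 -> rowdeg (u *m N1) ord0 = (rowdeg u ord0 + d)%N.
Proof. move=> h; apply: pred_deg => //; [exact: N1s | exact: N1f]. Qed.

Lemma ybound (p0 : 'rV[{poly F}]_m) : r p0 *m G^T = 0 ->
  (rowdeg (- (p0 *m N1 *m M^T *m N2h^T)) ord0 <= rowdeg (p0 *m N1) ord0)%N.
Proof.
move=> h0; have [->|p0nz] := eqVneq p0 0; first by rewrite !mul0mx oppr0 rowdeg0.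
set x := p0 *m N1; set y := - (x *m M^T *m N2h^T).
have [->|ynz] := eqVneq y 0; first by rewrite rowdeg0.
set v := - (y *m K2 + x *m M^T).
have e2 : r N2h^T *m r K2 = 1%:M - r N2^T *m r pK2h.
  by rewrite -(ratmx1 _) -I2e ratmxD !ratmxM addrK.
have eD : r p0 *m r N1 *m r M^T *m r N2^T = r p0 *m (r D)^T.
  by rewrite -ratmx_tr hD !trmx_mul trmxK !ratmxM !mulmxA.
have eS : r p0 *m (r D)^T = - (r p0 *m (ss_tf A B C)^T).
  by apply/eqP; rewrite -addr_eq0 -mulmxDr -raddfD /= -hG h0.
have hv : r v = r (p0 *m polymx B^T) *m invmx (r (char_poly_mx A^T))
                *m r (polymx (C^T *m K2h)).
  rewrite /v /y ratmxN ratmxD !ratmxM ratmxN !ratmxM mulNmx opprD opprK.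
  rewrite -!mulmxA e2 !mulmxA mulmxBr mulmx1 addrAC subrr add0r !mulmxA eD eS.
  rewrite mulNmx opprK /ss_tf !trmx_mul trmx_inv -!ratmx_tr -cpm_tr !polymx_tr.
  by rewrite polymxM !ratmxM polymx_tr !mulmxA.
have hvx : (rowdeg v ord0 <= rowdeg x ord0)%N.
  have [->|vnz] := eqVneq v 0; first by rewrite rowdeg0.
  have h1 := proper_deg hv vnz.
  have h2 : (rowdeg (p0 *m polymx B^T) ord0 <= rowdeg p0 ord0 + 0)%N.
    by apply: rowdeg_mul_le => i j; apply: polymx_size.
  rewrite /x degN1 //; lia.
have : (rowdeg (y *m K2) ord0 <= rowdeg x ord0 + 1)%N.
  have -> : y *m K2 = - v - x *m M^T by rewrite /v opprK addrK.
  apply: rowdeg_add_le; first by rewrite rowdegN; lia.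
  rewrite rowdegN; apply: rowdeg_mul_le => i j; rewrite mxE; exact: hMs.
rewrite (pred_deg K2s K2f ynz); lia.
Qed.

Lemma rowA k (z : 'M_(k,m)) : z *m G^T = 0 -> z *m (r Phi)^T *m Gh^T = 0.
Proof.
move=> h; have := colA (Z := z^T); rewrite -[G *m _]trmxK trmx_mul trmxK h trmx0.
by move=> /(_ erefl) /(congr1 trmx); rewrite !trmx_mul trmxK trmx0 ?mulmxA.
Qed.

Lemma rowB k (w : 'M_(k, m + mh + ph)) : w *m Gh^T = 0 ->
  w = w *m (r Psi)^T *m (r Phi)^T /\ w *m (r Psi)^T *m G^T = 0.
Proof.
move=> h; have := colB (W := w^T); rewrite -[Gh *m _]trmxK trmx_mul trmxK h trmx0.
case/(_ erefl) => h1 h2; split.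
  by rewrite -[LHS]trmxK {1}h1 !trmx_mul trmxK ?mulmxA.
by have := congr1 trmx h2; rewrite !trmx_mul trmxK trmx0 ?mulmxA.
Qed.

Lemma PhiT : Phi^T = row_mx N1 (- (N1 *m M^T *m N2h^T)).
Proof. by rewrite /Phi tr_col_mx trmxK raddfN /= !trmx_mul trmxK mulmxA. Qed.

Lemma rPsiPhi : (r Phi)^T *m (r Psi)^T = 1%:M.
Proof. by rewrite -trmx_mul -ratmxM PsiPhi ratmx1 trmx1. Qed.

Lemma rowdegQ l (P : 'M[{poly F}]_(l, m)) i :
  row_free (r P) -> r P *m G^T = 0 -> rowdeg (P *m Phi^T) i = (rowdeg P i + d)%N.
Proof.
move=> fr hP; rewrite PhiT mul_mx_row rowdeg_row_mx.
rewrite -(rowdeg_row (P *m N1)) -(rowdeg_row (P *m - _)) !row_mul -(rowdeg_row P).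
have nz := rowfree_prow_nz i fr.
have h0 : r (row i P) *m G^T = 0 by rewrite ratmx_rowsel -row_mul hP row0.
rewrite mulmxN !mulmxA rowdegN.
have := ybound h0; rewrite rowdegN.
by rewrite degN1 //; move=> h; apply/maxn_idPl.
Qed.

Theorem partA s : right_min_indices G s -> right_min_indices Gh [seq (e + d)%N | e <- s].
Proof.
case=> srt [l [P [[/andP [frP eqPV] minP] hperm]]].
case/andP: eqPV => le1 le2.
have hPk : r P *m G^T = 0 by apply/sub_kermxP.
set Q := P *m Phi^T.
have rQ : r Q = r P *m (r Phi)^T by rewrite ratmxM ratmx_tr.
have hQk : r Q *m Gh^T = 0 by rewrite rQ; exact: rowA.
have QK : (r Q <= kermx Gh^T)%MS by apply/sub_kermxP.
have QP : r Q *m (r Psi)^T = r P by rewrite rQ -mulmxA rPsiPhi mulmx1.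
have KQ : (kermx Gh^T <= r Q)%MS.
  have [h1 h2] := rowB (mulmx_ker Gh^T).
  have : (kermx Gh^T *m (r Psi)^T <= r P)%MS by apply: submx_trans le2; apply/sub_kermxP.
  case/submxP => c hc; rewrite {1}h1 hc -mulmxA -rQ; exact: submxMl.
have frQ : row_free (r Q).
  rewrite /row_free eqn_leq rank_leq_row /= -{1}(eqP frP) -QP; exact: mxrankM_maxl.
split; first by rewrite sorted_map; apply: sub_sorted srt => x y /=; rewrite leq_add2r.
exists l, Q; split; last first.
  have -> : [seq rowdeg Q i | i <- enum 'I_l] =
            [seq (e + d)%N | e <- [seq rowdeg P i | i <- enum 'I_l]].
    by rewrite -map_comp; apply: eq_map => i /=; rewrite rowdegQ.
  exact: perm_map.
split; first by apply/andP; split => //; apply/andP; split.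
move=> a' P' /andP [frP' /andP [le1' le2']].
have hP'k : r P' *m Gh^T = 0 by apply/sub_kermxP.
have [h1 h2] := rowB hP'k.
set Z := P' *m Psi^T.
have rZ : r Z = r P' *m (r Psi)^T by rewrite ratmxM ratmx_tr.
have ePZ : P' = Z *m Phi^T.
  by apply: ratmx_inj; rewrite ratmxM ratmx_tr rZ {1}h1.
have frZ : row_free (r Z).
  rewrite /row_free eqn_leq rank_leq_row /= -{1}(eqP frP') {1}ePZ ratmxM.
  exact: mxrankM_maxl.
have basZ : poly_basis_of (right_null G) Z.
  apply/andP; split=> //; apply/andP; split; first by apply/sub_kermxP; rewrite rZ.
  apply: submx_trans le2 _.
  have : (r Q <= r P')%MS by apply: submx_trans QK le2'.
  case/submxP => c hc; rewrite -QP hc -mulmxA -rZ; exact: submxMl.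
have hl : a' = l.
  have e1 : \rank (r P') = \rank (kermx Gh^T) by apply: eqmx_rank; apply/andP.
  have e2 : \rank (r Q) = \rank (kermx Gh^T) by apply: eqmx_rank; apply/andP.
  by rewrite -(eqP frP') -(eqP frQ) e1 e2.
have hdeg : forall i, (rowdeg Z i + d <= rowdeg P' i)%N.
  move=> i; rewrite ePZ PhiT mul_mx_row rowdeg_row_mx -(rowdeg_row (Z *m N1)) row_mul.
  rewrite degN1 ?rowdeg_row ?leq_maxl //; exact: rowfree_prow_nz.
have hZP := minP _ _ basZ.
rewrite /totdeg; under eq_bigr => i _ do rewrite rowdegQ //.
apply: leq_trans (_ : \sum_(i < a') (rowdeg Z i + d) <= _)%N; last first.
  by apply: leq_sum => i _; exact: hdeg.
rewrite !big_split /= !sum_nat_const !card_ord (_ : (a' * d = l * d)%N) ?hl // leq_add2r.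
exact: hZP.
Qed.
End Main.

End Aux.
Import Aux.

Lemma ss_tf_tr (F : fieldType) n p m (A : 'M[F]_n) (B : 'M[F]_(n, m)) (C : 'M[F]_(p, n)) :
  (ss_tf A B C)^T = ss_tf A^T C^T B^T.
Proof.
by rewrite /ss_tf !trmx_mul trmx_inv -!ratmx_tr -cpm_tr !polymx_tr mulmxA.
Qed.

Lemma Ghat_tr (F : fieldType) n p m ph mh (A : 'M[F]_n) (B : 'M[F]_(n, m)) (C : 'M[F]_(p, n))
  (M : 'M[{poly F}]_(p + ph, m + mh)) (K1 : 'M[{poly F}]_(mh, m + mh))
  (K2 : 'M[{poly F}]_(ph, p + ph)) (K1h : 'M[F]_(m, m + mh)) (K2h : 'M[F]_(p, p + ph)) :
  (Ghat A B C M K1 K2 K1h K2h)^T = Ghat A^T C^T B^T M^T K2 K1 K2h K1h.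
Proof.
rewrite /Ghat tr_block_mx raddfD /= ss_tf_tr !trmx_mul !trmxK trmx0 -!ratmx_tr trmxK.
by [].
Qed.

Lemma mxdeg_size (F : fieldType) a b (M : 'M[{poly F}]_(a, b)) :
  (mxdeg M <= 1)%N -> forall i j, (size (M i j) <= 2)%N.
Proof.
rewrite /mxdeg => h i j.
have h1 := leq_bigmax (F := fun j => size (M i j)) j.
have h2 := leq_bigmax (F := fun i => \max_(j < b) size (M i j)) i.
move: h h1 h2; case: (\max_(i < a) _) => [|x] /=; lia.
Qed.

Theorem corollary6p2 (F : fieldType) (n p m ph mh : nat)
  (G : 'M[ratF F]_(p, m))
  (D : 'M[{poly F}]_(p, m)) (A : 'M[F]_n) (B : 'M[F]_(n, m)) (C : 'M[F]_(p, n))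
  (K1 : 'M[{poly F}]_(mh, m + mh)) (K2 : 'M[{poly F}]_(ph, p + ph))
  (N1 : 'M[{poly F}]_(m, m + mh)) (N2 : 'M[{poly F}]_(p, p + ph))
  (M : 'M[{poly F}]_(p + ph, m + mh))
  (K1h : 'M[F]_(m, m + mh)) (K2h : 'M[F]_(p, p + ph))
  (N1h : 'M[{poly F}]_(mh, m + mh)) (N2h : 'M[{poly F}]_(ph, p + ph))
  (T S : 'M[F]_n) :
  G = ratmx D + ss_tf A B C ->
  minimal_order_realization A B C ->
  (1 < mxdeg D)%N ->
  minimal_basis K1 -> row_degrees_eq K1 1 ->
  minimal_basis K2 -> row_degrees_eq K2 1 ->
  dual_minimal_bases K1 N1 -> equal_row_degrees N1 ->
  dual_minimal_bases K2 N2 -> equal_row_degrees N2 ->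
  (mxdeg M <= 1)%N ->
  D = N2 *m M *m N1^T ->
  mxdeg D = (mxdeg N1 + mxdeg N2 + 1)%N ->
  col_mx K1 (polymx K1h) *m row_mx N1h^T N1^T = 1%:M ->
  row_mx N1h^T N1^T *m col_mx K1 (polymx K1h) = 1%:M ->
  col_mx K2 (polymx K2h) *m row_mx N2h^T N2^T = 1%:M ->
  row_mx N2h^T N2^T *m col_mx K2 (polymx K2h) = 1%:M ->
  T \in unitmx -> S \in unitmx ->
  (forall s, right_min_indices G s ->
     right_min_indices (Ghat A B C M K1 K2 K1h K2h) [seq (e + mxdeg N1)%N | e <- s]) /\
  (forall s, left_min_indices G s ->
     left_min_indices (Ghat A B C M K1 K2 K1h K2h) [seq (e + mxdeg N2)%N | e <- s]).
Proof.
move=> hG _ _ hK1 hK1d hK2 hK2d [_ hN1 _ _] hN1e [_ hN2 _ _] hN2e hM hD _ U1 U1' U2 U2' _ _.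
have hMs := @mxdeg_size _ _ _ M hM.
split=> s hs.
  exact: (partA hG hD U1 U1' U2 U2' hK2 hK2d hN1 hN1e hMs hs).
have hG' : G^T = ratmx D^T + ss_tf A^T C^T B^T by rewrite hG raddfD /= ratmx_tr ss_tf_tr.
have hD' : D^T = N1 *m M^T *m N2^T by rewrite hD !trmx_mul trmxK mulmxA.
have hMs' : forall i j, (size (M^T i j) <= 2)%N by move=> i j; rewrite mxE.
have hs' : right_min_indices G^T s by rewrite /right_min_indices /right_null trmxK.
have := partA hG' hD' U2 U2' U1 U1' hK1 hK1d hN2 hN2e hMs' hs'.
by rewrite /left_min_indices /left_null /right_min_indices /right_null /Gh -Ghat_tr trmxK.
Qed.
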